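(* Let $K$ be a field, $c\in K\setminus\{0\}$, $n\ge1$, and let $f$ be the $c$-frieze of order $n$ associated with an $n$-admissible family $(x_i)_{i\in\mathbb{Z}}$. For all $i,j\in\mathbb{Z}$ with $-1\le j-i\le n$ and $f(i,j)\neq0$: (a) $x_{j+1}=\dfrac{f(i,j+1)-cf(i,j-1)}{f(i,j)}$; (b) $x_{i-1}=\dfrac{f(i-1,j)-cf(i+1,j)}{f(i,j)}$.
   Context: The $c$-continuant polynomials $P_k=P_k^c$ ($k\ge-1$) are defined by $P_{-1}=0$, $P_0=1$, and for $k\ge1$, $P_k(y_1,\dots,y_k)=y_kP_{k-1}(y_1,\dots,y_{k-1})+cP_{k-2}(y_1,\dots,y_{k-2})$. A family $(x_i)_{i\in\mathbb{Z}}$ in $K$ is $n$-admissible if $P_{n+2}(x_i,\dots,x_{i+n+1})=0$ for all $i$. Let $\mathbb{B}_n=\{(i,j)\in\mathbb{Z}^2:-2\le j-i\le n+1\}$. The $c$-frieze of order $n$ associated with $(x_i)$ is $f:\mathbb{B}_n\to K$, $f(i,j)=P_{j-i+1}(x_i,\dots,x_j)$. *)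

(* Defs.v *)
From mathcomp Require Import all_boot all_order all_algebra.
Set Implicit Arguments. Unset Strict Implicit. Unset Printing Implicit Defensive.
Import Order.TTheory GRing.Theory Num.Theory.
Local Open Scope ring_scope.

(* contQ c x i m = P^c_{m-1}(x_i, ..., x_{i+m-2}),  i.e. the c-continuant
   polynomial P_{m-1} evaluated at the m-1 consecutive terms of the family x
   starting at index i.  (m = 0 gives P_{-1} = 0, m = 1 gives P_0 = 1.) *)
Fixpoint contQ (K : fieldType) (c : K) (x : int -> K) (i : int) (m : nat) : K :=
  match m with
  | 0%N => 0
  | 1%N => 1
  | (m'.+1 as m1).+1 => x (i + m'%:Z) * contQ c x i m1 + c * contQ c x i m'
  end.

(* P^c_k(x_i, ..., x_{i+k-1}) for k >= -1 (k : int; value for k < -1 is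
   irrelevant and set to 0). *)
Definition contP (K : fieldType) (c : K) (x : int -> K) (i : int) (k : int) : K :=
  if (k < -1)%R then 0 else contQ c x i (absz (k + 1)).

Definition admissible (K : fieldType) (c : K) (n : nat) (x : int -> K) : Prop :=
  forall i : int, contP c x i (n%:Z + 2) = 0.

(* The c-frieze of order n associated with x, on B_n = {-2 <= j-i <= n+1}:
   f(i,j) = P_{j-i+1}(x_i, ..., x_j). *)
Definition frieze (K : fieldType) (c : K) (x : int -> K) (i j : int) : K :=
  contP c x i (j - i + 1).

(* Main.v *)
Require Import Defs.
From mathcomp Require Import all_boot all_order all_algebra.
From mathcomp Require Import ring lra zify.
Import Order.TTheory GRing.Theory Num.Theory.
Local Open Scope ring_scope.

Lemma contQ_left (K : fieldType) (c : K) (x : int -> K) (m : nat) : forall i : int,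
  contQ c x i m.+2 = x i * contQ c x (i + 1) m.+1 + c * contQ c x (i + 2) m.
Proof.
suff H : forall i, (contQ c x i m.+2 = x i * contQ c x (i + 1) m.+1 + c * contQ c x (i + 2) m)
  /\ (contQ c x i m.+3 = x i * contQ c x (i + 1) m.+2 + c * contQ c x (i + 2) m.+1).
  by move=> i; case: (H i).
elim: m => [|m IH] i.
  split; rewrite /= ?addr0; first ring.
  ring.
case: (IH i) => _ H2; split; first exact: H2.
case: (IH i) => H1 _.
have -> : contQ c x i m.+4 = x (i + m.+2%:Z) * contQ c x i m.+3 + c * contQ c x i m.+2 by [].
rewrite H2 H1.
have -> : contQ c x (i+1) m.+3 = x (i + 1 + m.+1%:Z) * contQ c x (i+1) m.+2 + c * contQ c x (i+1) m.+1 by [].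
have -> : contQ c x (i+2) m.+2 = x (i + 2 + m%:Z) * contQ c x (i+2) m.+1 + c * contQ c x (i+2) m by [].
have -> : i + 1 + m.+1%:Z = i + m.+2%:Z by lia.
have -> : i + 2 + m%:Z = i + m.+2%:Z by lia.
ring.
Qed.

Lemma contP_nat (K : fieldType) (c : K) (x : int -> K) (i : int) (m : nat) (k : int) :
  k = m%:Z - 1 -> contP c x i k = contQ c x i m.
Proof.
move=> ->; rewrite /contP.
have -> : (m%:Z - 1 < -1) = false by apply/negbTE; rewrite -leNgt; lia.
by rewrite subrK absz_nat.
Qed.

Theorem mainTheorem13 (K : fieldType) (c : K) (n : nat) (x : int -> K) :
  c != 0 -> (1 <= n)%N -> admissible c n x ->
  forall i j : int, -1 <= j - i <= n%:Z -> frieze c x i j != 0 ->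
    x (j + 1) = (frieze c x i (j + 1) - c * frieze c x i (j - 1)) / frieze c x i j
    /\ x (i - 1) = (frieze c x (i - 1) j - c * frieze c x (i + 1) j) / frieze c x i j.
Proof.
move=> _ _ _ i j /andP [Hl _].
have [k Hk] : exists k : nat, j = i + k%:Z - 1.
  exists (absz (j - i + 1)); rewrite gez0_abs; [ring | lia].
subst j; rewrite /frieze.
rewrite (@contP_nat _ _ _ _ k.+1); last by lia.
rewrite (@contP_nat _ _ _ _ k.+2); last by lia.
rewrite (@contP_nat _ _ _ _ k); last by ring.
rewrite (@contP_nat _ _ _ (i+1) k); last by ring.
rewrite (@contP_nat _ _ _ (i-1) k.+2); last by lia.
move=> Hnz; split.
  have -> : contQ c x i k.+2 = x (i + k%:Z) * contQ c x i k.+1 + c * contQ c x i k by [].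
  have -> : i + k%:Z - 1 + 1 = i + k%:Z by ring.
  by rewrite addrK mulfK.
rewrite contQ_left.
have -> : i - 1 + 1 = i by ring.
have -> : i - 1 + 2 = i + 1 by ring.
by rewrite addrK mulfK.
Qed.
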